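(* Let $S$ be a skew lattice that is strongly distributive or co-strongly distributive. Then $S$ is a left distributive solution of the Yang–Baxter equation.
   Context: A skew lattice is a set $S$ with two binary operations $\wedge,\vee$, each idempotent and associative, satisfying the absorption laws $x\wedge(x\vee y)=x=x\vee(x\wedge y)$ and $(x\wedge y)\vee y=y=(x\vee y)\wedge y$ for all $x,y\in S$. $S$ is strongly distributive if it satisfies $(x\vee y)\wedge z=(x\wedge z)\vee(y\wedge z)$ and $x\wedge(y\vee z)=(x\wedge y)\vee(x\wedge z)$; it is co-strongly distributive if it satisfies $(x\wedge y)\vee z=(x\vee z)\wedge(y\vee z)$ and $x\vee(y\wedge z)=(x\vee y)\wedge(x\vee z)$. $S$ is a left distributive solution if $r_L(x,y)=(x\wedge y,y\vee x)$ satisfies $(r_L\times\mathrm{id})\circ(\mathrm{id}\times r_L)\circ(r_L\times\mathrm{id})=(\mathrm{id}\times r_L)\circ(r_L\times\mathrm{id})\circ(\mathrm{id}\times r_L)$. *)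

(* Defs.v *)
Definition idempotent {S : Type} (op : S -> S -> S) : Prop := forall x, op x x = x.
Definition associative {S : Type} (op : S -> S -> S) : Prop :=
  forall x y z, op x (op y z) = op (op x y) z.

Definition skew_lattice {S : Type} (meet join : S -> S -> S) : Prop :=
  idempotent meet /\ idempotent join /\ associative meet /\ associative join /\
  (forall x y, meet x (join x y) = x) /\
  (forall x y, join x (meet x y) = x) /\
  (forall x y, join (meet x y) y = y) /\
  (forall x y, meet (join x y) y = y).

Definition strongly_distributive {S : Type} (meet join : S -> S -> S) : Prop :=
  (forall x y z, meet (join x y) z = join (meet x z) (meet y z)) /\
  (forall x y z, meet x (join y z) = join (meet x y) (meet x z)).

Definition co_strongly_distributive {S : Type} (meet join : S -> S -> S) : Prop :=
  (forall x y z, join (meet x y) z = meet (join x z) (join y z)) /\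
  (forall x y z, join x (meet y z) = meet (join x y) (join x z)).

Definition r_L {S : Type} (meet join : S -> S -> S) (p : S * S) : S * S :=
  (meet (fst p) (snd p), join (snd p) (fst p)).

Definition r12 {S : Type} (r : S * S -> S * S) (t : S * S * S) : S * S * S :=
  let '(x, y, z) := t in let '(a, b) := r (x, y) in (a, b, z).
Definition r23 {S : Type} (r : S * S -> S * S) (t : S * S * S) : S * S * S :=
  let '(x, y, z) := t in let '(b, c) := r (y, z) in (x, b, c).

(* Braid relation (r x id)(id x r)(r x id) = (id x r)(r x id)(id x r). *)
Definition is_YB_solution {S : Type} (r : S * S -> S * S) : Prop :=
  forall t : S * S * S, r12 r (r23 r (r12 r t)) = r23 r (r12 r (r23 r t)).

Definition left_distributive_solution {S : Type} (meet join : S -> S -> S) : Prop :=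
  is_YB_solution (r_L meet join).

(* Main.v *)
Require Import Defs.

Theorem mainTheorem11 (S : Type) (meet join : S -> S -> S) :
  skew_lattice meet join ->
  strongly_distributive meet join \/ co_strongly_distributive meet join ->
  left_distributive_solution meet join.
Proof.
  intros [Im [Ij [Am [Aj [Ab1 [Ab2 [Ab3 Ab4]]]]]]] H.
  unfold left_distributive_solution, is_YB_solution.
  intros [[x y] z]. unfold r12, r23, r_L; simpl.
  assert (E1 : meet (meet x y) (meet (join y x) z) = meet x (meet y z)).
  { rewrite <- Am, (Am y (join y x) z), Ab1. reflexivity. }
  assert (E3 : join z (join y x) = join (join z y) (join (meet y z) x)).
  { rewrite <- (Aj z y), (Aj y (meet y z) x), Ab2. reflexivity. }
  assert (E2 : join (meet (join y x) z) (meet x y) =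
               meet (join (meet y z) x) (join z y)).
  { destruct H as [[D1 D2]|[D1 D2]].
    - rewrite D1, D1, <- Am, Ab1, D2, Aj. reflexivity.
    - rewrite D1, <- Aj, Ab2, (D2 z x y), (D1 y z x), Am. reflexivity. }
  rewrite E1, E2, E3. reflexivity.
Qed.
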